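(* Let $A\subseteq B$ be an extension of commutative rings, and let $\phi:B\to B_{\mathrm{red}}$ be the canonical surjection (so $\phi(A)=A_{\mathrm{red}}\subseteq B_{\mathrm{red}}$). Then the group morphism $\mathfrak{C}(A,B)\to \mathfrak{C}(A_{\mathrm{red}},B_{\mathrm{red}})$ induced by $L\mapsto \phi(L)A_{\mathrm{red}}$ is an isomorphism.
   Context: All rings are commutative with identity; $R_{\mathrm{red}}$ is $R$ modulo its nilradical. For an extension of rings $R\subseteq S$ and $R$-submodules $L,L'$ of $S$, $LL'$ is the $R$-submodule of finite sums $\sum x_ky_k$ with $x_k\in L, y_k\in L'$. An $R$-submodule $L$ of $S$ is an invertible ideal of $R\subseteq S$ if $LL'=R$ for some $R$-submodule $L'$ of $S$; these form an abelian group $\mathscr{G}(R,S)$ under multiplication, and the ideal class group is $\mathfrak{C}(R,S)=\mathscr{G}(R,S)/\{Rx : x\in S^\ast\}$. *)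

(* Defs.v *)
From HB Require Import structures.
From mathcomp Require Import all_boot all_order all_algebra.
Set Implicit Arguments. Unset Strict Implicit. Unset Printing Implicit Defensive.
Import GRing.Theory.
Local Open Scope ring_scope.

Section Defs.
Variable S : comPzRingType.

Definition seteq (X Y : S -> Prop) : Prop := forall x, X x <-> Y x.

Definition is_subring (R : S -> Prop) : Prop :=
  [/\ R 1, forall x y, R x -> R y -> R (x - y) & forall x y, R x -> R y -> R (x * y)].

Definition unitS (x : S) : Prop := exists y, x * y = 1.

Definition nilpotentS (x : S) : Prop := exists n : nat, x ^+ n = 0.

Definition submod (R L : S -> Prop) : Prop :=
  [/\ L 0, forall x y, L x -> L y -> L (x + y) & forall r x, R r -> L x -> L (r * x)].

Definition prodsub (L L' : S -> Prop) : S -> Prop :=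
  fun z => exists (n : nat) (f g : 'I_n -> S),
    (forall i, L (f i)) /\ (forall i, L' (g i)) /\ z = \sum_(i < n) f i * g i.

(* invertible ideals of R ⊆ S : elements of 𝒢(R,S) *)
Definition invertible (R L : S -> Prop) : Prop :=
  submod R L /\ exists L', submod R L' /\ seteq (prodsub L L') R.

Definition principal (R : S -> Prop) (x : S) : S -> Prop :=
  fun y => exists r, R r /\ y = r * x.

(* L and L' define the same class in ℭ(R,S) = 𝒢(R,S)/{Rx : x ∈ S^*} *)
Definition same_class (R L L' : S -> Prop) : Prop :=
  exists x, unitS x /\ seteq L' (prodsub L (principal R x)).
End Defs.

Definition img (S T : Type) (f : S -> T) (L : S -> Prop) : T -> Prop :=
  fun y => exists x, L x /\ y = f x.

(* Main.v *)
Require Import Defs.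
From HB Require Import structures.
From mathcomp Require Import all_boot all_order all_algebra.
From mathcomp Require Import ring zify.
From Stdlib Require Import ClassicalEpsilon.
Set Implicit Arguments. Unset Strict Implicit. Unset Printing Implicit Defensive.
Import GRing.Theory.
Local Open Scope ring_scope.

Section Gen.
Variable S : comPzRingType.
Implicit Types (L R P : S -> Prop).

Lemma seteq_sym L L' : seteq L L' -> seteq L' L.
Proof. by move=> H x; split => /H. Qed.
Lemma seteq_trans L1 L2 L3 : seteq L1 L2 -> seteq L2 L3 -> seteq L1 L3.
Proof. by move=> H1 H2 x; split => [/H1/H2|/H2/H1]. Qed.

Lemma prodsub_ind L L' P : P 0 -> (forall x y, P x -> P y -> P (x + y)) ->
  (forall x y, L x -> L' y -> P (x * y)) -> forall z, prodsub L L' z -> P z.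
Proof.
move=> P0 PD PM z [n [f [g [Hf [Hg ->]]]]].
by apply: (big_ind P) => // i _; apply: PM.
Qed.

Lemma prodsub1 L L' x y : L x -> L' y -> prodsub L L' (x * y).
Proof. by move=> Hx Hy; exists 1%N, (fun=> x), (fun=> y); rewrite big_ord1. Qed.

Lemma prodsub0 L L' : prodsub L L' 0.
Proof. by exists 0%N, (fun=> 0), (fun=> 0); rewrite big_ord0; do !split; case. Qed.

Lemma prodsub_add L L' x y : prodsub L L' x -> prodsub L L' y -> prodsub L L' (x + y).
Proof.
move=> [n [f [g [Hf [Hg ->]]]]] [m [f' [g' [Hf' [Hg' ->]]]]].
exists (n + m)%N, (fun i => match split i with inl j => f j | inr j => f' j end),
  (fun i => match split i with inl j => g j | inr j => g' j end).
split; first by move=> i; case: (split i).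
split; first by move=> i; case: (split i).
rewrite big_split_ord /=.
congr (_ + _); apply: eq_bigr => i _.
  by have -> : split (lshift m i) = inl i by exact: (unsplitK (inl i)).
by have -> : split (rshift n i) = inr i by exact: (unsplitK (inr i)).
Qed.

Lemma prodsub_seteq L1 L2 L1' L2' : seteq L1 L2 -> seteq L1' L2' ->
  seteq (prodsub L1 L1') (prodsub L2 L2').
Proof.
move=> H H' z; split.
  move=> [n [f [g [Hf [Hg ->]]]]].
  by exists n, f, g; split => [i|]; [exact/H|split => // i; exact/H'].
move=> [n [f [g [Hf [Hg ->]]]]].
by exists n, f, g; split => [i|]; [exact/H|split => // i; exact/H'].
Qed.

Lemma prodsubC L L' : seteq (prodsub L L') (prodsub L' L).
Proof.
move=> z; split.
  move=> [n [f [g [Hf [Hg ->]]]]].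
  by exists n, g, f; do 2!split => //; apply: eq_bigr => i _; exact: mulrC.
move=> [n [f [g [Hf [Hg ->]]]]].
by exists n, g, f; do 2!split => //; apply: eq_bigr => i _; exact: mulrC.
Qed.

Lemma submod_sum R L n (F : 'I_n -> S) : submod R L -> (forall i, L (F i)) ->
  L (\sum_(i < n) F i).
Proof. by case=> L0 LD _ HF; apply: (big_ind L) => // i _. Qed.

Lemma prodsub_mod R L L' : submod R L -> submod R (prodsub L L').
Proof.
case=> L0 LD LM; split; [exact: prodsub0|exact: prodsub_add|].
move=> r z Hr [n [f [g [Hf [Hg ->]]]]].
exists n, (fun i => r * f i), g; split; first by move=> i; apply: LM.
split => //; rewrite mulr_sumr; apply: eq_bigr => i _; exact: mulrA.
Qed.

Lemma submod_seteq R L L' : seteq L L' -> submod R L -> submod R L'.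
Proof.
move=> H [L0 LD LM]; split; first exact/H.
  by move=> x y /H Hx /H Hy; apply/H; apply: LD.
by move=> r x Hr /H Hx; apply/H; apply: LM.
Qed.

Lemma prin_char R N y : R 1 -> submod R N ->
  seteq (prodsub N (principal R y)) (fun z => exists m, N m /\ z = m * y).
Proof.
move=> R1 [N0 ND NM] z; split.
  apply: (prodsub_ind (P := fun w => exists m, N m /\ w = m * y)).
  - by exists 0; rewrite mul0r.
  - by move=> _ _ [m [Hm ->]] [m' [Hm' ->]]; exists (m + m'); rewrite mulrDl; split => //; apply: ND.
  - move=> x _ Hx [r [Hr ->]]; exists (r * x); split; first exact: NM.
    by rewrite mulrA (mulrC x).
move=> [m [Hm ->]]; apply: prodsub1 => //; exists 1; by rewrite mul1r.
Qed.

Lemma nil_unit (n : S) k : n ^+ k = 0 -> (1 + n) * (\sum_(i < k) (- n) ^+ i) = 1.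
Proof.
move=> Hn; have := subrX1 (- n) k.
rewrite exprNn Hn mulr0 sub0r => H.
have -> : 1 + n = - (- n - 1) by rewrite opprB opprK addrC.
by rewrite mulNr -H opprK.
Qed.

End Gen.

Section Sub.
Variable S : comPzRingType.
Variable A : S -> Prop.
Hypothesis HA : is_subring A.

Lemma A1 : A 1. Proof. by case: HA. Qed.
Lemma A0 : A 0. Proof. by case: HA => H1 HB _; rewrite -(subrr 1); apply: HB. Qed.
Lemma AN x : A x -> A (- x).
Proof. by case: HA => H1 HB _ Hx; rewrite -sub0r; apply: HB => //; exact: A0. Qed.
Lemma AD x y : A x -> A y -> A (x + y).
Proof. by case: HA => H1 HB _ Hx Hy; rewrite -(opprK y); apply: HB => //; exact: AN. Qed.
Lemma AB x y : A x -> A y -> A (x - y).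
Proof. by case: HA => H1 HB _; apply: HB. Qed.
Lemma AM x y : A x -> A y -> A (x * y).
Proof. by case: HA => _ _; apply. Qed.
Lemma AX x k : A x -> A (x ^+ k).
Proof. by move=> Hx; elim: k => [|k IH]; [rewrite expr0; exact: A1|rewrite exprS; apply: AM]. Qed.
Lemma Asum n (F : 'I_n -> S) : (forall i, A (F i)) -> A (\sum_(i < n) F i).
Proof. by move=> HF; apply: (big_ind A) => //; [exact: A0|exact: AD]. Qed.
Lemma A_submod : submod A A.
Proof. split; [exact: A0|exact: AD|exact: AM]. Qed.
End Sub.

Section Img.
Variables (S T : comPzRingType) (phi : {rmorphism S -> T}).
Implicit Types (L R : S -> Prop).

Lemma img_seteq L L' : seteq L L' -> seteq (img phi L) (img phi L').
Proof. by move=> H z; split => -[x [/H Hx ->]]; exists x. Qed.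

Lemma img_submod R L : submod R L -> submod (img phi R) (img phi L).
Proof.
case=> L0 LD LM; split; first by exists 0; rewrite rmorph0.
  by move=> _ _ [x [Hx ->]] [y [Hy ->]]; exists (x + y); rewrite rmorphD; split => //; apply: LD.
by move=> _ _ [r [Hr ->]] [x [Hx ->]]; exists (r * x); rewrite rmorphM; split => //; apply: LM.
Qed.

Lemma img_prodsub L L' : seteq (prodsub (img phi L) (img phi L')) (img phi (prodsub L L')).
Proof.
move=> z; split.
  apply: (prodsub_ind (P := img phi (prodsub L L'))).
  - by exists 0; rewrite rmorph0; split => //; exact: prodsub0.
  - move=> _ _ [x [Hx ->]] [y [Hy ->]]; exists (x + y); rewrite rmorphD; split => //.
    exact: prodsub_add.
  - move=> _ _ [x [Hx ->]] [y [Hy ->]]; exists (x * y); rewrite rmorphM; split => //.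
    exact: prodsub1.
move=> [_ [[n [f [g [Hf [Hg ->]]]]] ->]].
exists n, (phi \o f), (phi \o g); split; first by move=> i; exists (f i).
split; first by move=> i; exists (g i).
by rewrite rmorph_sum; apply: eq_bigr => i _; rewrite rmorphM.
Qed.

Lemma Phi_img R L : R 1 -> submod R L ->
  seteq (prodsub (img phi L) (img phi R)) (img phi L).
Proof.
move=> R1 [L0 LD LM] z; split.
  apply: (prodsub_ind (P := img phi L)).
  - by exists 0; rewrite rmorph0.
  - by move=> _ _ [x [Hx ->]] [y [Hy ->]]; exists (x + y); rewrite rmorphD; split => //; apply: LD.
  - move=> _ _ [x [Hx ->]] [r [Hr ->]]; exists (r * x).
    by split; [exact: LM|rewrite rmorphM mulrC].
move=> [x [Hx ->]]; rewrite -[phi x]mulr1 -(rmorph1 phi); apply: prodsub1; by [exists x|exists 1].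
Qed.
End Img.

Lemma polyid : let e : {poly int} := 'X in
  let e' := e^+2 *+ 3 - e^+3 *+ 2 in
  e'^+2 - e' = (e^+2 - e)^+2 * ((e^+2 - e) *+ 4 - 3%:R).
Proof. move=> e e'; rewrite /e' /e. ring. Qed.

Lemma newton_id (R : pzRingType) (e : R) :
  let e' := e^+2 *+ 3 - e^+3 *+ 2 in
  e'^+2 - e' = (e^+2 - e)^+2 * ((e^+2 - e) *+ 4 - 3%:R).
Proof.
have [H|H] := eqVneq (1 : R) 0.
  move=> e'. by rewrite -[LHS]mulr1 -[RHS]mulr1 H !mulr0.
pose R' : nzRingType := HB.pack R (GRing.PzSemiRing_isNonZero.Build R H).
have cf : commr_rmorph (intr : int -> R') (e : R').
  move=> x; exact: (commr_int (e : R') x).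
pose h : {rmorphism {poly int} -> R'} := horner_morph cf.
have hX : h 'X = e by exact: horner_morphX.
have := congr1 h polyid.
rewrite /= !(rmorphB, rmorphXn, rmorphMn, rmorphM, rmorph_nat, rmorph1) hX.
exact.
Qed.

Definition newt (R : pzRingType) (e : R) := e^+2 *+ 3 - e^+3 *+ 2.

Lemma idem_lift (R : pzRingType) (m : nat) (x : R) :
  (x ^+ 2 - x) ^+ m = 0 -> exists k, (iter k (@newt R) x) ^+ 2 = iter k (@newt R) x.
Proof.
elim: m {-2}m (leqnn m) x => [|M IH] m Hm x Hx.
  have Hm0 : m = 0%N by lia.
  move: Hx; rewrite Hm0 expr0 => H10; exists 0%N.
  by rewrite -[LHS]mulr1 -[RHS]mulr1 H10 !mulr0.
have [Hm1|Hm1] := leqP m 1.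
  exists 0%N => /=; apply/eqP; rewrite -subr_eq0; apply/eqP.
  case: m Hm Hx Hm1 => [|[|//]] _ Hx _.
    by rewrite expr0 in Hx; rewrite -[LHS]mulr1 Hx mulr0.
  by rewrite expr1 in Hx.
have := newton_id x; rewrite -/(newt x) => Hn.
have [k Hk] : exists k, (iter k (@newt R) (newt x)) ^+ 2 = iter k (@newt R) (newt x).
  apply: (IH (uphalf m)); first by rewrite uphalf_half; lia.
  rewrite Hn.
  set z := x ^+ 2 - x.
  have cz : GRing.comm (z ^+ 2) (z *+ 4 - 3%:R).
    have czw : GRing.comm z (z *+ 4 - 3%:R).
      apply: commrB; [apply: commrMn; exact: commr_refl | exact: commr_nat].
    apply: commr_sym; apply: commrX; exact: commr_sym.
  rewrite exprMn_comm // -exprM.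
  have -> : (2 * uphalf m = m + (2 * uphalf m - m))%N by rewrite uphalf_half; lia.
  by rewrite exprD Hx !mul0r.
by exists k.+1; rewrite iterSr.
Qed.

Section Nil.
Variable B : comPzRingType.

Lemma iter_mulX (z : B) k : iter k (fun y => z * y) 1 = z ^+ k.
Proof. by elim: k => [|k IH] //=; rewrite IH exprS. Qed.

Lemma prod_nil_zero (zs : seq B) p (s : seq B) :
  (forall z, z \in zs -> z ^+ p = 0) -> {subset s <= zs} ->
  (size zs * p < size s)%N -> \prod_(x <- s) x = 0.
Proof.
elim: zs s => [|z zs IH] s Hp Hs Hsz.
  by case: s Hs Hsz => [|x s] // /(_ x); rewrite inE eqxx => /(_ isT).
rewrite (bigID (fun x => x == z)) /=.
have [Hc|Hc] := leqP p (count (pred1 z) s).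
  rewrite (eq_bigr (fun=> z)); last by move=> x /eqP.
  rewrite big_const_seq iter_mulX.
  have -> : count (fun x => x == z) s = (p + (count (pred1 z) s - p))%N by
    rewrite subnKC.
  by rewrite exprD Hp ?mul0r // inE eqxx.
rewrite -[X in _ * X = _]big_filter (IH _ _ _ _) ?mulr0 //.
- by move=> y Hy; apply: Hp; rewrite inE Hy orbT.
- move=> y; rewrite mem_filter => /andP [Hyz /Hs]; rewrite inE => /orP [/eqP Hy|//].
  by rewrite Hy eqxx in Hyz.
- rewrite size_filter; have := count_predC (pred1 z) s.
  move: Hsz; rewrite /= mulSn => Hsz Hcs.
  have -> : count (fun x => ~~ (x == z)) s = count (predC (pred1 z)) s by [].
  move: Hc Hsz; rewrite -Hcs; move: (count_mem z s) (count (predC (pred1 z)) s) (size zs * p)%N => a d q; lia.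
Qed.

Inductive G (T : seq B) (k : nat) : B -> Prop :=
| G0 : G T k 0
| GD x y : G T k x -> G T k y -> G T k (x + y)
| GM b (s : seq B) : {subset s <= T} -> (k <= size s)%N -> G T k (b * \prod_(x <- s) x).

Lemma G_mul T k x z : G T k x -> z \in T -> G T k.+1 (x * z).
Proof.
move=> HG Hz; elim: HG => [|x1 y1 _ H1 _ H2|b s Hs Hk].
- by rewrite mul0r; apply: G0.
- by rewrite mulrDl; apply: GD.
- have -> : b * \prod_(x <- s) x * z = b * \prod_(x <- z :: s) x.
    by rewrite big_cons; ring.
  apply: GM; last by [].
  by move=> y; rewrite inE => /orP [/eqP ->|/Hs].
Qed.

Lemma G_zero T k p x : (forall z, z \in T -> z ^+ p = 0) ->
  (size T * p < k)%N -> G T k x -> x = 0.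
Proof.
move=> Hp Hk; elim => [|x1 y1 _ -> _ ->|b s Hs Hsk]; rewrite ?addr0 //.
rewrite (prod_nil_zero Hp Hs) ?mulr0 //; move: Hk Hsk; move: (size T * p)%N => q; lia.
Qed.

Lemma Zpow_G n (Z : 'M[B]_n) T k i j : (forall i j, Z i j \in T) -> G T k ((Z ^+ k) i j).
Proof.
move=> HT; elim: k i j => [|k IH] i j.
  rewrite expr0 mxE.
  have H := @GM T 0%N ((i == j)%:R) [::]; rewrite big_nil mulr1 in H.
  by apply: H.
rewrite exprSr -mulmxE mxE.
apply: (big_ind (G T k.+1)); [exact: G0|by move=> x y; apply: GD|].
by move=> l _; apply: G_mul.
Qed.

Lemma mx_nil n (Z : 'M[B]_n) : (forall i j, nilpotentS (Z i j)) -> exists m, Z ^+ m = 0.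
Proof.
move=> H.
pose pf (ij : 'I_n * 'I_n) := proj1_sig (constructive_indefinite_description _ (H ij.1 ij.2)).
have Hpf ij : Z ij.1 ij.2 ^+ pf ij = 0 :=
  proj2_sig (constructive_indefinite_description _ (H ij.1 ij.2)).
pose p := (\max_(ij : 'I_n * 'I_n) pf ij)%N.
pose T := [seq Z ij.1 ij.2 | ij <- enum {: 'I_n * 'I_n}].
have HT i j : Z i j \in T by apply/mapP; exists (i, j); rewrite ?mem_enum.
have Hp z : z \in T -> z ^+ p = 0.
  move=> /mapP [ij _ ->].
  have Hle := @leq_bigmax _ pf ij.
  have -> : p = (pf ij + (p - pf ij))%N by rewrite subnKC.
  by rewrite exprD Hpf mul0r.
exists (size T * p).+1; apply/matrixP => i j; rewrite mxE.
exact: (G_zero Hp _ (Zpow_G _ _ _ HT)).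
Qed.
End Nil.

Section Core.
Variables (B Bred : comPzRingType) (A : B -> Prop) (phi : {rmorphism B -> Bred}).
Hypothesis HA : is_subring A.
Hypothesis Hker : forall x : B, phi x = 0 <-> nilpotentS x.

Lemma unit_of_phi1 (t : B) : A t -> phi t = 1 -> exists s, A s /\ t * s = 1.
Proof.
move=> At Pt.
have [e He] : nilpotentS (t - 1) by apply/Hker; rewrite rmorphB rmorph1 Pt subrr.
exists (\sum_(i < e) (- (t - 1)) ^+ i); split.
  apply: Asum => // i; apply: AX => //; apply: AN => //; apply: AB => //; exact: A1.
by have := nil_unit He; rewrite addrC subrK.
Qed.

Lemma core (L L' L2 L3 : B -> Prop) (y : Bred) :
  submod A L -> submod A L' -> seteq (prodsub L L2) A -> seteq (prodsub L' L3) A ->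
  (forall l, L l -> exists l', L' l' /\ phi l' = phi l * y) ->
  (forall l', L' l' -> exists l, L l /\ phi l' = phi l * y) ->
  exists k, unitS k /\ forall z, L' z <-> exists l, L l /\ z = l * k.
Proof.
move=> HL HL' E2 E3 H1 H2.
have [n [f [g [Hf [Hg E1]]]]] : prodsub L L2 1 by apply/E2; exact: A1.
have [m [p [q [Hp [Hq E4]]]]] : prodsub L' L3 1 by apply/E3; exact: A1.
pose f' i := proj1_sig (constructive_indefinite_description _ (H1 _ (Hf i))).
have Hf' i : L' (f' i) /\ phi (f' i) = phi (f i) * y :=
  proj2_sig (constructive_indefinite_description _ (H1 _ (Hf i))).
pose r j := proj1_sig (constructive_indefinite_description _ (H2 _ (Hp j))).
have Hr j : L (r j) /\ phi (p j) = phi (r j) * y :=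
  proj2_sig (constructive_indefinite_description _ (H2 _ (Hp j))).
pose k := \sum_(i < n) f' i * g i.
pose k' := \sum_(j < m) r j * q j.
have HLk l : L l -> L' (l * k).
  move=> Hl; rewrite /k mulr_sumr; apply: (submod_sum HL') => i.
  have -> : l * (f' i * g i) = (l * g i) * f' i by ring.
  case: HL' => _ _; apply; last by case: (Hf' i).
  by apply/E2; apply: prodsub1.
have HLk' l : L' l -> L (l * k').
  move=> Hl; rewrite /k' mulr_sumr; apply: (submod_sum HL) => j.
  have -> : l * (r j * q j) = (l * q j) * r j by ring.
  case: HL => _ _; apply; last by case: (Hr j).
  by apply/E3; apply: prodsub1.
have Pk : phi k = y.
  rewrite /k rmorph_sum.
  under eq_bigr => i _ do rewrite rmorphM (proj2 (Hf' i)) mulrAC.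
  rewrite -mulr_suml; under eq_bigr => i _ do rewrite -rmorphM.
  by rewrite -rmorph_sum -E1 rmorph1 mul1r.
have Pk' : phi k' * y = 1.
  rewrite /k' rmorph_sum mulr_suml.
  under eq_bigr => j _ do rewrite rmorphM mulrAC -(proj2 (Hr j)) -rmorphM.
  by rewrite -rmorph_sum -E4 rmorph1.
pose t := k * k'.
have At : A t.
  rewrite -[t]mulr1 E4 mulr_sumr; apply: Asum => // j.
  rewrite mulrA; apply/E3; apply: prodsub1 => //.
  have -> : t * p j = (p j * k') * k by rewrite /t; ring.
  exact/HLk/HLk'.
have Pt : phi t = 1 by rewrite rmorphM Pk mulrC.
have [s [As Hts]] := unit_of_phi1 At Pt.
exists k; split; first by exists (k' * s); rewrite mulrA.
move=> z; split.
  move=> Hz; exists (s * z * k'); split.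
    apply: HLk'; case: HL' => _ _; apply => //.
  have -> : s * z * k' * k = (t * s) * z by rewrite /t; ring.
  by rewrite Hts mul1r.
by move=> [l [Hl ->]]; apply: HLk.
Qed.


Local Notation Ared := (img phi A).
Local Notation Phi L := (prodsub (img phi L) (img phi A)).

Lemma Ared1 : Ared 1.
Proof. by exists 1; rewrite rmorph1; split => //; exact: A1. Qed.

Lemma Phi_eq L : submod A L -> seteq (Phi L) (img phi L).
Proof. by move=> HL; apply: Phi_img => //; exact: A1. Qed.

Lemma Phi_submod L : submod A L -> submod Ared (Phi L).
Proof. move=> HL; apply: (submod_seteq (seteq_sym (Phi_eq HL))); exact: img_submod. Qed.

Lemma part1 L : invertible A L -> invertible Ared (Phi L).
Proof.
move=> [HL [L' [HL' E]]]; split; first exact: Phi_submod.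
exists (Phi L'); split; first exact: Phi_submod.
apply: seteq_trans (prodsub_seteq (Phi_eq HL) (Phi_eq HL')) _.
apply: seteq_trans (img_prodsub _ _ _) _.
exact: img_seteq.
Qed.

Lemma part2 L L' : invertible A L -> invertible A L' ->
  seteq (Phi (prodsub L L')) (prodsub (Phi L) (Phi L')).
Proof.
move=> [HL _] [HL' _].
apply: seteq_trans (Phi_eq (prodsub_mod L' HL)) _.
apply: seteq_trans (seteq_sym (img_prodsub _ _ _)) _.
apply: prodsub_seteq; apply: seteq_sym; exact: Phi_eq.
Qed.

Lemma part3 L L' : invertible A L -> invertible A L' ->
  (same_class A L L' <-> same_class Ared (Phi L) (Phi L')).
Proof.
move=> [HL [L2 [HL2 E2]]] [HL' [L3 [HL3 E3]]]; split.
  move=> [x [[x' Hx] E]]; exists (phi x); split.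
    by exists (phi x'); rewrite -rmorphM Hx rmorph1.
  have E' := seteq_trans E (prin_char x (A1 HA) HL).
  apply: seteq_trans (Phi_eq HL') _.
  apply: seteq_trans _ (seteq_sym (prin_char (phi x) Ared1 (Phi_submod HL))).
  move=> z; split.
    move=> [l' [/E' [l [Hl ->]] ->]]; exists (phi l); split; last by rewrite rmorphM.
    by apply/(Phi_eq HL); exists l.
  move=> [_ [/(Phi_eq HL) [l [Hl ->]] ->]]; exists (l * x); split; last by rewrite rmorphM.
  by apply/E'; exists l.
move=> [y [Hy E]].
have E' := seteq_trans E (prin_char y Ared1 (Phi_submod HL)).
have [k [Hk Ek]] : exists k, unitS k /\ forall z, L' z <-> exists l, L l /\ z = l * k.
  apply: (core HL HL' E2 E3).
    move=> l Hl.
    have : Phi L' (phi l * y).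
      by apply/E'; exists (phi l); split => //; apply/(Phi_eq HL); exists l.
    by move=> /(Phi_eq HL') [l' [Hl' E0]]; exists l'; split => //; exact: (esym E0).
  move=> l' Hl'.
  have : Phi L' (phi l') by apply/(Phi_eq HL'); exists l'.
  by move=> /E' [_ [/(Phi_eq HL) [l [Hl ->]] ->]]; exists l.
exists k; split => //.
apply: seteq_trans Ek (seteq_sym (prin_char k (A1 HA) HL)).
Qed.

Hypothesis Hsurj : forall y : Bred, exists x : B, phi x = y.

Lemma unit_phi1 (s : B) : phi s = 1 -> exists s', s * s' = 1 /\ phi s' = 1.
Proof.
move=> Ps.
have [e He] : nilpotentS (s - 1) by apply/Hker; rewrite rmorphB rmorph1 Ps subrr.
exists (\sum_(i < e) (- (s - 1)) ^+ i).
have Hs : s * (\sum_(i < e) (- (s - 1)) ^+ i) = 1.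
  by have := nil_unit He; rewrite addrC subrK.
split => //.
by have := congr1 phi Hs; rewrite rmorphM Ps mul1r rmorph1.
Qed.

Section Mx.
Variable n : nat.
Implicit Types X Y : 'M[B]_n.

Lemma FmM X Y : map_mx phi (X * Y) = map_mx phi X * map_mx phi Y.
Proof. by rewrite -!mulmxE map_mxM. Qed.
Lemma FmD X Y : map_mx phi (X + Y) = map_mx phi X + map_mx phi Y.
Proof. exact: map_mxD. Qed.
Lemma FmB X Y : map_mx phi (X - Y) = map_mx phi X - map_mx phi Y.
Proof. exact: map_mxB. Qed.
Lemma Fm1 : map_mx phi (1 : 'M[B]_n) = 1.
Proof. exact: map_mx1. Qed.
Lemma FmMn X k : map_mx phi (X *+ k) = map_mx phi X *+ k.
Proof. by elim: k => [|k IH]; rewrite ?mulr0n ?map_mx0 // !mulrS FmD IH. Qed.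
Lemma FmX X k : map_mx phi (X ^+ k) = map_mx phi X ^+ k.
Proof. by elim: k => [|k IH]; rewrite ?expr0 ?Fm1 // !exprS FmM IH. Qed.
Lemma Fm_newt X : map_mx phi (newt X) = newt (map_mx phi X).
Proof. by rewrite /newt FmB !FmMn !FmX. Qed.

Definition AMx X := forall i j, A (X i j).
Lemma AM1 : AMx 1.
Proof. move=> i j; rewrite mxE; case: (i == j); [exact: A1|exact: A0]. Qed.
Lemma AMD X Y : AMx X -> AMx Y -> AMx (X + Y).
Proof. by move=> HX HY i j; rewrite mxE; apply: AD. Qed.
Lemma AMB X Y : AMx X -> AMx Y -> AMx (X - Y).
Proof. by move=> HX HY i j; rewrite !mxE; apply: AB. Qed.
Lemma AMM X Y : AMx X -> AMx Y -> AMx (X * Y).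
Proof. by move=> HX HY i j; rewrite -mulmxE mxE; apply: Asum => // k; apply: AM. Qed.
Lemma AMMn X k : AMx X -> AMx (X *+ k).
Proof.
move=> HX; elim: k => [|k IH]; last by rewrite mulrS; apply: AMD.
by move=> i j; rewrite mulr0n mxE; exact: A0.
Qed.
Lemma AMX X k : AMx X -> AMx (X ^+ k).
Proof. by move=> HX; elim: k => [|k IH]; [rewrite expr0; exact: AM1|rewrite exprS; apply: AMM]. Qed.
Lemma AM_newt X : AMx X -> AMx (newt X).
Proof. by move=> HX; apply: AMB; apply: AMMn; apply: AMX. Qed.

Lemma span_submod (v : 'I_n -> B) :
  submod A (fun z => exists a, (forall j, A (a j)) /\ z = \sum_(j < n) a j * v j).
Proof.
split.
- exists (fun=> 0); split; first by move=> j; exact: A0.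
  by rewrite big1 // => j _; rewrite mul0r.
- move=> _ _ [a [Ha ->]] [a' [Ha' ->]]; exists (fun j => a j + a' j); split.
    by move=> j; apply: AD.
  by rewrite -big_split; apply: eq_bigr => j _; rewrite mulrDl.
- move=> r _ Hr [a [Ha ->]]; exists (fun j => r * a j); split.
    by move=> j; apply: AM.
  by rewrite mulr_sumr; apply: eq_bigr => j _; rewrite mulrA.
Qed.

Lemma span_scal (v : 'I_n -> B) z j : A z ->
  (fun z => exists a, (forall j, A (a j)) /\ z = \sum_(j < n) a j * v j) (z * v j).
Proof.
move=> Hz; exists (fun k => if k == j then z else 0); split.
  by move=> k; case: (k == j) => //; exact: A0.
rewrite (bigD1 j) //= eqxx big1 ?addr0 // => k /negbTE ->; exact: mul0r.
Qed.
End Mx.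

Lemma part4 M : invertible Ared M -> exists L, invertible A L /\ same_class Ared (Phi L) M.
Proof.
move=> [HM [M' [HM' EM]]].
have [n [mu [mu' [Hmu [Hmu' E1]]]]] : prodsub M M' 1 by apply/EM; exact: Ared1.
pose lift y := proj1_sig (constructive_indefinite_description _ (Hsurj y)).
have liftK y : phi (lift y) = y := proj2_sig (constructive_indefinite_description _ (Hsurj y)).
have HE i j : exists a, A a /\ mu' i * mu j = phi a.
  have : Ared (mu j * mu' i) by apply/EM; apply: prodsub1.
  by move=> [a [Ha E]]; exists a; rewrite mulrC.
pose Xf i j := proj1_sig (constructive_indefinite_description _ (HE i j)).
have HXf i j : A (Xf i j) /\ mu' i * mu j = phi (Xf i j) :=
  proj2_sig (constructive_indefinite_description _ (HE i j)).
pose X : 'M[B]_n := \matrix_(i, j) Xf i j.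
pose Eb : 'M[Bred]_n := \matrix_(i, j) (mu' i * mu j).
have FX : map_mx phi X = Eb by apply/matrixP => i j; rewrite !mxE (proj2 (HXf i j)).
have AX' : AMx X by move=> i j; rewrite mxE; case: (HXf i j).
have Eb2 : Eb * Eb = Eb.
  apply/matrixP => i j; rewrite -mulmxE !mxE.
  under eq_bigr => k _ do rewrite !mxE.
  have -> : \sum_k mu' i * mu k * (mu' k * mu j) = mu' i * (\sum_k mu k * mu' k) * mu j.
    by rewrite mulr_sumr mulr_suml; apply: eq_bigr => k _; ring.
  by rewrite -E1 mulr1.
pose Z := X * X - X.
have FZ : map_mx phi Z = 0 by rewrite FmB FmM FX Eb2 subrr.
have [m Zm] : exists m, Z ^+ m = 0.
  apply: mx_nil => i j; apply/Hker.
  by have := congr1 (fun W : 'M[Bred]_n => W i j) FZ; rewrite /= !mxE.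
have Zm' : (X ^+ 2 - X) ^+ m = 0 by rewrite expr2.
have [k Hk] := idem_lift Zm'.
have Eb_newt : newt Eb = Eb.
  rewrite /newt expr2 Eb2 exprS expr2 Eb2 Eb2.
  by rewrite -mulrnBr.
have Fe k' : map_mx phi (iter k' (@newt _) X) = Eb.
  by elim: k' => [|k' IH] //=; rewrite Fm_newt IH Eb_newt.
have Ae k' : AMx (iter k' (@newt _) X).
  by elim: k' => [|k' IH] //=; apply: AM_newt.
pose e := iter k (@newt _) X.
have ee : e * e = e by rewrite -expr2.
pose b0 : 'rV[B]_n := \row_j lift (mu j).
pose c0 : 'cV[B]_n := \col_i lift (mu' i).
pose s0 := (b0 *m c0) 0 0.
have Ps0 : phi s0 = 1.
  rewrite /s0 mxE rmorph_sum E1; apply: eq_bigr => j _; by rewrite !mxE rmorphM !liftK.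
have [s' [Hs' Ps']] := unit_phi1 Ps0.
pose c := s' *: c0.
have bc : b0 *m c = 1%:M.
  apply/matrixP => i j; rewrite (ord1 i) (ord1 j) -scalemxAr [LHS]mxE -/s0 mulrC Hs'.
  by rewrite mxE.
pose P := c *m b0.
have PP : P * P = P by rewrite -mulmxE /P mulmxA -(mulmxA c) bc mulmx1.
have FP : map_mx phi P = Eb.
  by apply/matrixP => i j; rewrite !mxE big_ord1 !mxE !rmorphM Ps' !liftK mul1r.
pose U := e * P + (1 - e) * (1 - P).
have FU : map_mx phi U = 1.
  rewrite /U FmD !FmM !FmB Fm1 Fe FP Eb2.
  by rewrite mulrBl mul1r mulrBr mulr1 Eb2 subrr subr0 addrC subrK.
have [dinv Hd] : exists d, \det U * d = 1.
  have Pd : phi (\det U) = 1 by rewrite -det_map_mx FU det1.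
  by have [d [Hd _]] := unit_phi1 Pd; exists d.
pose Ui := dinv *: \adj U.
have UUi : U *m Ui = 1%:M by rewrite -scalemxAr mul_mx_adj scale_scalar_mx mulrC Hd.
have UiU : Ui *m U = 1%:M by rewrite -scalemxAl mul_adj_mx scale_scalar_mx mulrC Hd.
have eU : e * U = U * P.
  have e1e : e * (1 - e) = 0 by rewrite mulrBr mulr1 ee subrr.
  have P1P : (1 - P) * P = 0 by rewrite mulrBl mul1r PP subrr.
  rewrite /U [LHS]mulrDr [RHS]mulrDl !mulrA ee e1e mul0r addr0.
  by rewrite -(mulrA e) PP -(mulrA (1 - e)) P1P mulr0 addr0.
have eq_e : e = U * P * Ui.
  by rewrite -eU -mulrA mulmxE in UUi *; rewrite UUi mulr1.
pose c' := U *m c.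
pose b' := b0 *m Ui.
have ecb i j : e i j = c' i 0 * b' 0 j.
  have -> : e = c' *m b' by rewrite eq_e -!mulmxE /c' /b' /P !mulmxA.
  by rewrite mxE big_ord1.
have bc' : \sum_j b' 0 j * c' j 0 = 1.
  have : b' *m c' = 1%:M by rewrite /b' /c' mulmxA -(mulmxA b0) UiU mulmx1 bc.
  by move/(congr1 (fun W : 'M[B]_1 => W 0 0)); rewrite !mxE.
have FUi : map_mx phi Ui = 1%:M.
  have := congr1 (map_mx phi) UUi; rewrite map_mxM map_mx1.
  by rewrite [map_mx phi U]FU mul1mx.
have Fb' j : phi (b' 0 j) = mu j.
  have : map_mx phi b' = map_mx phi b0 by rewrite map_mxM FUi mulmx1.
  by move/(congr1 (fun W : 'M[Bred]_(1, n) => W 0 j)); rewrite !mxE liftK.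
pose L := fun z => exists a, (forall j, A (a j)) /\ z = \sum_(j < n) a j * b' 0 j.
pose L' := fun z => exists a, (forall j, A (a j)) /\ z = \sum_(j < n) a j * c' j 0.
have HL : submod A L by exact: span_submod.
have HL' : submod A L' by exact: span_submod.
exists L; split.
  split => //; exists L'; split => // z; split.
    apply: (prodsub_ind (P := A)); [exact: A0|exact: AD|].
    move=> _ _ [a [Ha ->]] [a' [Ha' ->]].
    rewrite mulr_suml; apply: Asum => // j; rewrite mulr_sumr; apply: Asum => // i.
    have -> : a j * b' 0 j * (a' i * c' i 0) = (a j * a' i) * e i j by rewrite ecb; ring.
    by apply: AM => //; [apply: AM|exact: Ae].
  move=> Hz; rewrite -[z]mulr1 -bc' mulr_sumr.
  exists n, (fun j => z * b' 0 j), (fun j => c' j 0); split.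
    by move=> j; apply: span_scal.
  split; last by apply: eq_bigr => j _; rewrite mulrA.
  move=> j; rewrite -[c' j 0]mul1r; apply: span_scal; exact: A1.
exists 1; split; first by exists 1; rewrite mulr1.
apply: seteq_trans _ (seteq_sym (prin_char 1 Ared1 (Phi_submod HL))).
move=> z; split.
  move=> Hz.
  have Ha j : exists a, A a /\ z * mu' j = phi a.
    by have : Ared (z * mu' j) by apply/EM; apply: prodsub1.
  pose af j := proj1_sig (constructive_indefinite_description _ (Ha j)).
  have Haf j : A (af j) /\ z * mu' j = phi (af j) :=
    proj2_sig (constructive_indefinite_description _ (Ha j)).
  exists (phi (\sum_j af j * b' 0 j)); split.
    apply/(Phi_eq HL); exists (\sum_j af j * b' 0 j); split => //.
    by exists af; split => // j; case: (Haf j).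
  rewrite mulr1 rmorph_sum -[LHS]mulr1 E1 mulr_sumr; apply: eq_bigr => j _.
  by rewrite rmorphM Fb' -(proj2 (Haf j)); ring.
move=> [_ [/(Phi_eq HL) [l [[a [Ha El]] ->]] ->]].
rewrite mulr1 El rmorph_sum; apply: (submod_sum HM) => j.
rewrite rmorphM Fb'; case: HM => _ _ HMs; apply: HMs => //.
by exists (a j).
Qed.

End Core.

Unset Implicit Arguments.

Theorem theorem5p5 (B Bred : comPzRingType) (A : B -> Prop)
    (phi : {rmorphism B -> Bred}) :
  is_subring A ->
  (forall y : Bred, exists x : B, phi x = y) ->
  (forall x : B, phi x = 0 <-> nilpotentS x) ->
  (* the map L |-> phi(L) A_red, with A_red = phi(A) *)
  let Ared := img phi A in
  let Phi := fun L : B -> Prop => prodsub (img phi L) Ared in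
  (* it maps 𝒢(A,B) into 𝒢(A_red,B_red) *)
  (forall L, invertible A L -> invertible Ared (Phi L)) /\
  (* it is a group morphism *)
  (forall L L', invertible A L -> invertible A L' ->
     seteq (Phi (prodsub L L')) (prodsub (Phi L) (Phi L'))) /\
  (* it is well defined and injective on classes *)
  (forall L L', invertible A L -> invertible A L' ->
     (same_class A L L' <-> same_class Ared (Phi L) (Phi L'))) /\
  (* it is surjective on classes *)
  (forall M, invertible Ared M ->
     exists L, invertible A L /\ same_class Ared (Phi L) M).
Proof.
move=> HA Hsurj Hker Ared Phi.
split; first by move=> L; exact: (part1 phi HA).
split; first by move=> L L' HL HL'; exact: (part2 phi HA).
split; first by move=> L L' HL HL'; exact: (part3 HA Hker).
by move=> M; exact: (part4 HA Hker Hsurj).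
Qed.
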